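(* Let $n\ge 3$ and $f=x^n+a_{n-1}x^{n-1}+\cdots+a_0\in\mathbb{C}[x]$ with roots $r_1,\ldots,r_n$ (with multiplicity). Define the polynomials \[f_1(x,y)=\frac{f(y)-f(x)}{y-x},\qquad f_2(x,y)=\frac{f\left(\frac{x+y}{2}\right)-f(x)}{\frac{y-x}{2}}.\] Let $D_1=\prod_{1\le i<j\le n}(r_i-r_j)^2$ and $D_2=\prod_{1\le i,j,k\le n,\ i<j,\ j\ne k,\ k\ne i}(2r_k-r_i-r_j)$. Then $\operatorname{res}(f,\operatorname{res}(f_1,f_2,y),x)=0$ if and only if $D_1D_2=0$.
   Context: The quotients defining $f_1,f_2$ are polynomials in $x,y$. $\operatorname{res}(\cdot,\cdot,y)$ denotes the Sylvester resultant with respect to $y$ (and similarly for $x$). *)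

(* Defs.v *)
From HB Require Import structures.
From mathcomp Require Import all_boot all_order all_algebra.
Set Implicit Arguments. Unset Strict Implicit. Unset Printing Implicit Defensive.
Import Order.TTheory GRing.Theory Num.Theory.
Local Open Scope ring_scope.

(* Bivariate polynomials are elements of {poly {poly C}}: the inner variable
   ('X of {poly C}) is x, the outer variable ('X of {poly {poly C}}) is y. *)

Section Bivariate.
Variable C : numClosedFieldType.

Definition varx : {poly {poly C}} := ('X : {poly C})%:P.
Definition vary : {poly {poly C}} := 'X.

Definition f_of_y (f : {poly C}) : {poly {poly C}} := f ^:P.
Definition f_of_x (f : {poly C}) : {poly {poly C}} := f%:P.

Definition cst2 (c : C) : {poly {poly C}} := c%:P%:P.

Definition f1 (f : {poly C}) : {poly {poly C}} :=
  (f_of_y f - f_of_x f) %/ (vary - varx).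

Definition f2 (f : {poly C}) : {poly {poly C}} :=
  ((f_of_y f) \Po ((varx + vary) * cst2 (2^-1)) - f_of_x f)
    %/ ((vary - varx) * cst2 (2^-1)).

Definition D1 (n : nat) (r : 'I_n -> C) : C :=
  \prod_(i < n) \prod_(j < n | (i < j)%N) (r i - r j) ^+ 2.

Definition D2 (n : nat) (r : 'I_n -> C) : C :=
  \prod_(i < n) \prod_(j < n | (i < j)%N) \prod_(k < n | (j != k) && (k != i))
    (2 * r k - r i - r j).

End Bivariate.

(* Main.v *)
Require Import Defs.
From HB Require Import structures.
From mathcomp Require Import all_boot all_order all_algebra.
From mathcomp Require Import ring.
Import Order.TTheory GRing.Theory Num.Theory.
Local Open Scope ring_scope.
Set Implicit Arguments.

Lemma res_root (C : closedFieldType) (p q : {poly C}) : p != 0 ->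
  resultant p q = 0 <-> exists x, root p x && root q x.
Proof.
move=> pz; have nz : gcdp p q != 0 by rewrite gcdp_eq0 negb_and pz.
split.
- move/eqP; rewrite resultant_eq0 => H.
  have : size (gcdp p q) != 1 by rewrite gtn_eqF.
  by case/closed_rootP => x; rewrite root_gcd => ?; exists x.
- case=> x Hx; apply/eqP; rewrite resultant_eq0.
  by apply: (@root_size_gt1 _ x) => //; rewrite root_gcd.
Qed.

Lemma hornerYX (C : comNzRingType) (f : {poly C}) : (f ^:P).['X] = f.
Proof.
rewrite horner_coef size_map_polyC -[RHS]coefK poly_def.
by apply: eq_bigr => i _; rewrite coef_map /= mul_polyC.
Qed.

Section Phi.
Variable C : numClosedFieldType.
Variable a : C.
Local Notation phi := (map_poly (horner_eval a)).

Lemma phi_vary : phi (vary C) = 'X.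
Proof. by rewrite /vary map_polyX. Qed.
Lemma phi_varx : phi (varx C) = a%:P.
Proof. by rewrite /varx map_polyC /= horner_evalE hornerX. Qed.
Lemma phi_fy f : phi (f_of_y f) = f.
Proof.
rewrite /f_of_y -map_poly_comp_id0 ?horner_evalE ?horner0 //.
by rewrite (eq_map_poly (g := id)) ?map_poly_id // => x /=; rewrite horner_evalE hornerC.
Qed.
Lemma phi_fx f : phi (f_of_x f) = (f.[a])%:P.
Proof. by rewrite /f_of_x map_polyC /= horner_evalE. Qed.
Lemma phi_cst2 c : phi (cst2 c) = c%:P.
Proof. by rewrite /cst2 map_polyC /= horner_evalE hornerC. Qed.
End Phi.

Section Biv.
Variable C : numClosedFieldType.
Local Notation h := (2^-1 : C).

Lemma two_nz : (2 : C) != 0.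
Proof. by rewrite pnatr_eq0. Qed.
Lemma hh : h + h = 1.
Proof. by rewrite -mulr2n -[RHS](mulVf two_nz) mulr_natr. Qed.
Lemma h2 : h * 2 = 1.
Proof. by rewrite mulVf // two_nz. Qed.

Variable f : {poly C}.
Hypothesis fmon : f \is monic.
Hypothesis fsz : (1 < size f)%N.

Definition P1 := f_of_y f - f_of_x f.
Definition Q2 := (varx C + vary C) * cst2 h.
Definition P2 := f_of_y f \Po Q2 - f_of_x f.

Lemma K1 : f1 f * (vary C - varx C) = P1.
Proof.
have hr : root P1 'X.
  by rewrite /P1 rootE hornerD hornerN /f_of_y hornerYX /f_of_x hornerC subrr.
case/factor_theorem: hr => q Hq.
by rewrite /f1 -/P1 Hq /vary /varx Pdiv.IdomainMonic.mulpK ?monicXsubC.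
Qed.

Lemma Q2X : Q2.['X] = 'X.
Proof.
rewrite /Q2 hornerM hornerD /varx /vary /cst2 hornerC hornerX hornerC.
by rewrite mulrDl -mulrDr -polyCD hh mulr1.
Qed.

Lemma K2 : f2 f * ((vary C - varx C) * cst2 h) = P2.
Proof.
have hr : root P2 'X.
  by rewrite /P2 rootE hornerD hornerN horner_comp Q2X /f_of_y hornerYX /f_of_x hornerC subrr.
case/factor_theorem: hr => q Hq.
have E : P2 = (q * cst2 2) * ((vary C - varx C) * cst2 h).
  rewrite Hq -mulrA; congr (_ * _).
  by rewrite mulrCA /cst2 -!polyCM mulfV ?two_nz // !polyC1 mulr1.
have U : lead_coef ((vary C - varx C) * cst2 h) \is a GRing.unit.
  rewrite lead_coefM /vary /varx lead_coefXsubC mul1r /cst2 lead_coefC.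
  by apply/unitrP; exists (2%:P); rewrite -!polyCM h2 mulrC h2.
by rewrite /f2 -/Q2 -/P2 E Pdiv.IdomainUnit.mulpK.
Qed.

Lemma szfy : size (f_of_y f) = size f.
Proof. by rewrite /f_of_y size_map_polyC. Qed.

Lemma lead_fy : lead_coef (f_of_y f) = 1.
Proof. by rewrite /f_of_y lead_coef_map /= (monicP fmon). Qed.

Lemma szfx : (size (- f_of_x f) <= 1)%N.
Proof. by rewrite size_polyN /f_of_x size_polyC leq_b1. Qed.

Lemma lead_F1 : lead_coef (f1 f) = 1.
Proof.
have := congr1 lead_coef K1.
rewrite lead_coefM /vary /varx lead_coefXsubC mulr1 => ->.
by rewrite /P1 lead_coefDl ?lead_fy // szfy (leq_ltn_trans szfx).
Qed.

Lemma lead_Q2 : lead_coef Q2 = h%:P.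
Proof. by rewrite /Q2 lead_coefM addrC /vary /varx lead_coefXaddC mul1r /cst2 lead_coefC. Qed.

Lemma size_Q2 : size Q2 = 2.
Proof.
rewrite /Q2 addrC /vary /varx /cst2 mulrC mul_polyC size_scale ?size_XaddC //.
by rewrite polyC_eq0 invr_eq0 two_nz.
Qed.

Lemma lead_F2 : lead_coef (f2 f) * h%:P = (h ^+ (size f).-1)%:P.
Proof.
have := congr1 lead_coef K2.
rewrite lead_coefM lead_coefM /vary /varx lead_coefXsubC mul1r /cst2 lead_coefC => ->.
have szc : (1 < size (f_of_y f \Po Q2))%N.
  have := size_comp_poly (f_of_y f) Q2; rewrite size_Q2 muln1 szfy.
  case: (size (_ \Po _)) => [|m] /=; last by move=> ->; rewrite prednK ?(ltnW fsz).
  by move=> E; move: fsz; rewrite -(prednK (ltnW fsz)) -E.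
rewrite /P2 lead_coefDl ?(leq_ltn_trans szfx) //.
by rewrite lead_coef_comp ?size_Q2 // lead_fy lead_Q2 mul1r szfy rmorphXn.
Qed.

End Biv.

Lemma half_lem (T : comNzRingType) (x y c : T) : c + c = 1 -> (x + y)*c - x = (y - x)*c.
Proof. move=> e; transitivity ((x+y)*c - x*(c+c)); [by rewrite e mulr1 | ring]. Qed.

Section Spec.
Variable C : numClosedFieldType.
Local Notation h := (2^-1 : C).
Variable n : nat.
Variable r : 'I_n -> C.
Variable f : {poly C}.
Hypothesis Hf : f = \prod_(i < n) ('X - (r i)%:P).
Variable i : 'I_n.
Local Notation phi := (map_poly (horner_eval (r i))).

Definition g := \prod_(j < n | j != i) ('X - (r j)%:P).
Definition Qi := ((r i)%:P + 'X) * h%:P.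
Definition hi := \prod_(k < n | k != i) (Qi - (r k)%:P).

Lemma f_root_ri : f.[r i] = 0.
Proof. by rewrite Hf horner_prod (bigD1 i) //= hornerXsubC subrr mul0r. Qed.

Lemma phiF1 : phi (f1 f) = g.
Proof.
apply: (@mulIf _ ('X - (r i)%:P)); first by rewrite polyXsubC_eq0.
have := congr1 phi (@K1 C f); rewrite rmorphM /= rmorphB /= phi_vary phi_varx => ->.
rewrite /P1 rmorphB /= phi_fy phi_fx f_root_ri subr0.
by rewrite Hf (bigD1 i) //= mulrC.
Qed.

Lemma phiF2 : phi (f2 f) = hi.
Proof.
apply: (@mulIf _ (('X - (r i)%:P) * h%:P)).
  by rewrite mulf_neq0 ?polyXsubC_eq0 // polyC_eq0 invr_eq0 two_nz.
have := congr1 phi (@K2 C f); rewrite rmorphM /= rmorphM /= rmorphB /= phi_vary phi_varx phi_cst2 => ->.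
rewrite /P2 rmorphB /= phi_fx f_root_ri subr0 map_comp_poly phi_fy /Q2 rmorphM /= rmorphD /=.
rewrite phi_varx phi_vary phi_cst2 -/Qi.
rewrite Hf (big_morph (fun p => p \Po Qi) (fun p q => comp_polyM p q Qi) (_ : 1 \Po Qi = 1)); last by rewrite comp_polyC.
rewrite (eq_bigr (fun k => Qi - (r k)%:P)); last by move=> k _; rewrite comp_polyB comp_polyX comp_polyC.
rewrite (bigD1 i) //= mulrC /hi; congr (_ * _).
by rewrite /Qi half_lem // -polyCD hh.
Qed.

Lemma g_nz : g != 0.
Proof. by rewrite monic_neq0 // monic_prod_XsubC. Qed.

Lemma root_g x : root g x <-> exists2 j, j != i & x = r j.
Proof.
rewrite /g rootE horner_prod; split.
  by case/prodf_eq0 => j ji; rewrite hornerXsubC subr_eq0 => /eqP ->; exists j.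
by case=> j ji ->; apply/prodf_eq0; exists j => //; rewrite hornerXsubC subrr.
Qed.

Lemma root_hi x : root hi x <-> exists2 k, k != i & (r i + x) * h = r k.
Proof.
rewrite /hi rootE horner_prod; split.
  case/prodf_eq0 => k ki; rewrite hornerD hornerN hornerC /Qi hornerM hornerD hornerX !hornerC.
  by rewrite subr_eq0 => /eqP E; exists k.
case=> k ki E; apply/prodf_eq0; exists k => //.
by rewrite hornerD hornerN hornerC /Qi hornerM hornerD hornerX !hornerC E subrr.
Qed.

Hypothesis fsz : (1 < size f)%N.
Lemma f_monic : f \is monic.
Proof. by rewrite Hf monic_prod_XsubC. Qed.

Lemma evalR : horner_eval (r i) (resultant (f1 f) (f2 f)) = resultant g hi.
Proof.
rewrite map_resultant ?phiF1 ?phiF2 //.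
  by rewrite (@lead_F1 C f) ?f_monic // rmorph1 oner_neq0.
have := congr1 (horner_eval (r i)) (@lead_F2 C f f_monic fsz).
rewrite rmorphM /= !horner_evalE !hornerC.
apply: contra_eqN => /eqP ->; rewrite mul0r eq_sym expf_neq0 //.
by rewrite invr_eq0 two_nz.
Qed.

End Spec.

Lemma half_eq (C : numClosedFieldType) (x y : C) : x * 2^-1 = y <-> x = 2 * y.
Proof.
split=> [<-|->]; first by rewrite mulrCA mulfV ?two_nz // mulr1.
by rewrite mulrAC mulfV ?two_nz // mul1r.
Qed.

Lemma D_eq0 (C : numClosedFieldType) (n : nat) (r : 'I_n -> C) :
  D1 r * D2 r = 0 <->
  exists i j k : 'I_n, [/\ j != i, k != i & r i + r j = 2 * r k].
Proof.
split.
  move/eqP; rewrite mulf_eq0 => /orP[].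
    case/prodf_eq0 => i _ /prodf_eq0 [j ij]; rewrite expf_eq0 /= subr_eq0 => /eqP e.
    exists i, j, j; split; rewrite ?neq_ltn ?ij ?orbT //.
    by rewrite e mulr_natl mulr2n.
  case/prodf_eq0 => i _ /prodf_eq0 [j ij] /prodf_eq0 [k /andP[jk ki]].
  rewrite -addrA -opprD subr_eq0 => /eqP e.
  have ji : j != i by rewrite neq_ltn ij orbT.
  by exists i, j, k; split.
case=> i [j [k [ji ki e]]]; apply/eqP; rewrite mulf_eq0.
have [kj|kj] := eqVneq k j.
  subst k; have e' : r i = r j.
    by move: e; rewrite mulr_natl mulr2n => /addIr.
  apply/orP; left; apply/prodf_eq0.
  case: (ltngtP i j) => ij.
  - exists i => //; apply/prodf_eq0; exists j => //.
    by rewrite e' subrr expr2 mulr0.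
  - exists j => //; apply/prodf_eq0; exists i => //.
    by rewrite e' subrr expr2 mulr0.
  - by move: ji; rewrite (val_inj ij) eqxx.
apply/orP; right; apply/prodf_eq0.
case: (ltngtP i j) => ij.
- exists i => //; apply/prodf_eq0; exists j => //; apply/prodf_eq0; exists k.
    by rewrite eq_sym kj ki.
  by rewrite -addrA -opprD e subrr.
- exists j => //; apply/prodf_eq0; exists i => //; apply/prodf_eq0; exists k.
    by rewrite eq_sym ki kj.
  by rewrite -addrA -opprD [r j + _]addrC e subrr.
- by move: ji; rewrite (val_inj ij) eqxx.
Qed.

Unset Implicit Arguments.
Theorem proposition4 (C : numClosedFieldType) (n : nat) (f : {poly C})
    (r : 'I_n -> C) :
  (3 <= n)%N ->
  f = \prod_(i < n) ('X - (r i)%:P) ->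
  resultant f (resultant (f1 f) (f2 f)) = 0 <-> D1 r * D2 r = 0.
Proof.
move=> n3 Hf.
have fnz : f != 0 by rewrite monic_neq0 // (f_monic r Hf).
have n0 : (0 < n)%N by apply: leq_trans n3.
pose i0 := Ordinal n0.
have fsz : (1 < size f)%N.
  by apply: (@root_size_gt1 _ (r i0)) => //; rewrite rootE (f_root_ri r Hf _).
rewrite D_eq0 res_root //.
have step i : root (resultant (f1 f) (f2 f)) (r i) <->
    exists j k : 'I_n, [/\ j != i, k != i & r i + r j = 2 * r k].
  rewrite rootE -horner_evalE (evalR r Hf i fsz) -(rwP eqP) res_root ?g_nz //.
  split.
    case=> x /andP[/root_g [j ji ->] /root_hi [k ki /half_eq e]].
    by exists j, k.
  case=> j [k [ji ki e]]; exists (r j); apply/andP; split.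
    by apply/root_g; exists j.
  by apply/root_hi; exists k => //; apply/half_eq.
split.
  case=> x /andP[rf rR].
  move: rf; rewrite Hf rootE horner_prod => /prodf_eq0 [i _].
  rewrite hornerXsubC subr_eq0 => /eqP ex; subst x.
  by have /step [j [k H]] := rR; exists i, j, k.
case=> i [j [k H]]; exists (r i); apply/andP; split.
  by rewrite rootE (f_root_ri r Hf _).
by apply/step; exists j, k.
Qed.
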